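(* Let $\sum_{i=1}^n\alpha_i\cdot\lambda x.\vec t_i\in\mathcal S$ be a unitary distribution of closed abstractions. Then it belongs to $[\![\sharp\mathbb B\Rightarrow\sharp\mathbb B]\!]$ if and only if it represents a unitary operator $F:\mathbb C^2\to\mathbb C^2$.
   Context: Calculus. Fix a countably infinite set of variables. Pure values: $v,w::=x\mid\lambda x.\vec{s}\mid *\mid (v_1,v_2)\mid \mathtt{inl}(v)\mid\mathtt{inr}(v)$. Pure terms: $s,t::=v\mid s\,t\mid t;\vec{s}\mid \mathtt{let}\,(x_1,x_2)=t\,\mathtt{in}\,\vec{s}\mid \mathtt{match}\,t\,\{\mathtt{inl}\,x_1\mapsto\vec{s}_1\mid\mathtt{inr}\,x_2\mapsto\vec{s}_2\}$. Term distributions: $\vec{t}::=\vec{0}\mid t\mid \vec{s}+\vec{t}\mid\alpha\cdot\vec{t}$ ($\alpha\in\mathbb{C}$); value distributions are built from pure values only. Top-level distributions are considered modulo the congruence $\equiv$ of weak vector spaces (commutative monoid axioms for $+,\vec 0$; $1\cdot\vec t\equiv\vec t$; $\alpha\cdot(\beta\cdot\vec t)\equiv\alpha\beta\cdot\vec t$; $(\alpha+\beta)\cdot\vec t\equiv\alpha\cdot\vec t+\beta\cdot\vec t$; $\alpha\cdot(\vec t_1+\vec t_2)\equiv\alpha\cdot\vec t_1+\alpha\cdot\vec t_2$), which does not act inside pure terms; $0\cdot t\not\equiv\vec 0$; each distribution has a unique canonical form $\sum_i\alpha_i t_i$ with distinct pure $t_i$. Constructs are extended by linearity (application is bilinear: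 $(\sum_k\gamma_k t_k)(\sum_l\delta_l s_l)=\sum_{k,l}\gamma_k\delta_l t_ks_l$; pairs bilinear; $\mathtt{inl},\mathtt{inr}$ linear; $\mathtt{let},\mathtt{match},;$ linear in their first argument). $\mathtt{tt}:=\mathtt{inl}( * )$, $\mathtt{ff}:=\mathtt{inr}( * )$. Bilinear substitution: $\vec t\langle x:=\vec w\rangle=\sum_j\beta_j\vec t[x:=w_j]$ for $\vec w=\sum_j\beta_jw_j$. Atomic evaluation $\triangleright$ is call-by-value ($\beta_v$: $(\lambda x.\vec t)v\triangleright\vec t[x:=v]$; $*;\vec s\triangleright\vec s$; let on pairs of values; match on $\mathtt{inl}(v)$/$\mathtt{inr}(v)$; congruence rules reducing the argument of an application first, then the function, and the scrutinee of $;$, let, match). $\vec t\succ\vec t'$ iff $\vec t\equiv\alpha\cdot s+\vec r$, $\vec t'\equiv\alpha\cdot\vec s'+\vec r$, $s\triangleright\vec s'$; $\succ^*$ is its reflexive-transitive closure. Semantics. For closed value distributions in canonical form, $\langle\sum_i\alpha_iv_i|\sum_j\beta_jw_j\rangle=\sum_{i,j}\overline{\alpha_i}\beta_j\delta_{v_i,w_j}$; $\mathcal S$ is the set of closed value distributions of norm $1$. $[\![\mathbb U]\!]=\{*\}$, $[\![A+B]\!]=\{\mathtt{inl}(\vec v):\vec v\in[\![A]\!]\}\cup\{\mathtt{inr}(\vec w):\vec w\in[\![B]\!]\}$, $[\![\sharp A]\!]=\mathrm{Span}([\![A]\!])\cap\mathcal S$, $\mathbb B=\mathbb U+\mathbb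 U$, and $[\![A\Rightarrow B]\!]=\{(\sum_{i=1}^n\alpha_i\cdot\lambda x.\vec t_i)\in\mathcal S:\forall\vec v\in[\![A]\!],\ (\sum_i\alpha_i\cdot\vec t_i\langle x:=\vec v\rangle)\Vdash B\}$, where $\vec t\Vdash A$ means $\vec t\succ^*\vec v$ for some $\vec v\in[\![A]\!]$. The Boolean projection $\pi_{\mathbb B}:\mathrm{Span}(\{\mathtt{tt},\mathtt{ff}\})\to\mathbb C^2$ sends $\alpha\cdot\mathtt{tt}\mapsto(\alpha,0)$, $\beta\cdot\mathtt{ff}\mapsto(0,\beta)$, $\alpha\cdot\mathtt{tt}+\beta\cdot\mathtt{ff}\mapsto(\alpha,\beta)$. A closed distribution $\vec t$ represents $F:\mathbb C^2\to\mathbb C^2$ if for all $\vec v\in\mathrm{Span}(\{\mathtt{tt},\mathtt{ff}\})$ there is $\vec w\in\mathrm{Span}(\{\mathtt{tt},\mathtt{ff}\})$ with $\vec t\,\vec v\succ^*\vec w$ and $\pi_{\mathbb B}(\vec w)=F(\pi_{\mathbb B}(\vec v))$. $F$ is unitary if it is linear and preserves the inner product of $\mathbb C^2$. *)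

(* Defs.v *)
From HB Require Import structures.
From mathcomp Require Import all_boot all_algebra.
From mathcomp Require Import boolp Rstruct complex.
Set Implicit Arguments.
Unset Strict Implicit.
Unset Printing Implicit Defensive.
Import GRing.Theory Num.Theory.
Local Open Scope ring_scope.

Definition C : numClosedFieldType := (Rdefinitions.R)[i].

(* Binders: Lam binds index 0 in its body; Let (x1,x2)=t in s binds    *)
(* x1 as index 1 and x2 as index 0 in s; each Match branch binds its   *)
(* variable as index 0.                                                *)
Inductive val : Type :=
  | Var  : nat -> val
  | Lam  : dist -> val
  | Star : val
  | Pair : val -> val -> val
  | Inl  : val -> val
  | Inr  : val -> val
with tm : Type :=
  | TVal  : val -> tm
  | App   : tm -> tm -> tm
  | Seq   : tm -> dist -> tm
  | Let   : tm -> dist -> tm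
  | Match : tm -> dist -> dist -> tm
with dist : Type :=
  | D0    : dist
  | DPure : tm -> dist
  | DPlus : dist -> dist -> dist
  | DScal : C -> dist -> dist.

Fixpoint liftv (k : nat) (v : val) : val :=
  match v with
  | Var n => if (k <= n)%N then Var n.+1 else Var n
  | Lam d => Lam (liftd k.+1 d)
  | Star => Star
  | Pair a b => Pair (liftv k a) (liftv k b)
  | Inl a => Inl (liftv k a)
  | Inr a => Inr (liftv k a)
  end
with liftt (k : nat) (t : tm) : tm :=
  match t with
  | TVal v => TVal (liftv k v)
  | App a b => App (liftt k a) (liftt k b)
  | Seq a s => Seq (liftt k a) (liftd k s)
  | Let a s => Let (liftt k a) (liftd k.+2 s)
  | Match a s1 s2 => Match (liftt k a) (liftd k.+1 s1) (liftd k.+1 s2)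
  end
with liftd (k : nat) (d : dist) : dist :=
  match d with
  | D0 => D0
  | DPure t => DPure (liftt k t)
  | DPlus a b => DPlus (liftd k a) (liftd k b)
  | DScal c a => DScal c (liftd k a)
  end.

Fixpoint substv (k : nat) (w : val) (v : val) : val :=
  match v with
  | Var n => if n == k then w else if (k < n)%N then Var n.-1 else Var n
  | Lam d => Lam (substd k.+1 (liftv 0 w) d)
  | Star => Star
  | Pair a b => Pair (substv k w a) (substv k w b)
  | Inl a => Inl (substv k w a)
  | Inr a => Inr (substv k w a)
  end
with substt (k : nat) (w : val) (t : tm) : tm :=
  match t with
  | TVal v => TVal (substv k w v)
  | App a b => App (substt k w a) (substt k w b)
  | Seq a s => Seq (substt k w a) (substd k w s)
  | Let a s => Let (substt k w a) (substd k.+2 (liftv 0 (liftv 0 w)) s)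
  | Match a s1 s2 =>
      Match (substt k w a) (substd k.+1 (liftv 0 w) s1) (substd k.+1 (liftv 0 w) s2)
  end
with substd (k : nat) (w : val) (d : dist) : dist :=
  match d with
  | D0 => D0
  | DPure t => DPure (substt k w t)
  | DPlus a b => DPlus (substd k w a) (substd k w b)
  | DScal c a => DScal c (substd k w a)
  end.

Fixpoint closedv (k : nat) (v : val) : bool :=
  match v with
  | Var n => (n < k)%N
  | Lam d => closedd k.+1 d
  | Star => true
  | Pair a b => closedv k a && closedv k b
  | Inl a => closedv k a
  | Inr a => closedv k a
  end
with closedt (k : nat) (t : tm) : bool :=
  match t with
  | TVal v => closedv k v
  | App a b => closedt k a && closedt k b
  | Seq a s => closedt k a && closedd k s
  | Let a s => closedt k a && closedd k.+2 s
  | Match a s1 s2 => [&& closedt k a, closedd k.+1 s1 & closedd k.+1 s2]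
  end
with closedd (k : nat) (d : dist) : bool :=
  match d with
  | D0 => true
  | DPure t => closedt k t
  | DPlus a b => closedd k a && closedd k b
  | DScal _ a => closedd k a
  end.

(* Distributions modulo the weak-vector-space congruence.              *)
(* The congruence does not act inside pure terms: pure terms are       *)
(* compared syntactically (Leibniz equality).                          *)

Fixpoint occ (d : dist) (t : tm) : Prop :=
  match d with
  | D0 => False
  | DPure s => s = t
  | DPlus a b => occ a t \/ occ b t
  | DScal _ a => occ a t
  end.

Fixpoint coef (d : dist) (t : tm) : C :=
  match d with
  | D0 => 0
  | DPure s => if `[< s = t >] then 1 else 0
  | DPlus a b => coef a t + coef b t
  | DScal c a => c * coef a t
  end.

(* d1 == d2 : same canonical form  sum_i alpha_i t_i  (same distinct
   pure terms t_i, same coefficients alpha_i, zero coefficients kept). *)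
Definition dequiv (d1 d2 : dist) : Prop :=
  forall t, (occ d1 t <-> occ d2 t) /\ coef d1 t = coef d2 t.

Definition dsum (s : seq dist) : dist := foldr DPlus D0 s.

Fixpoint lin (f : tm -> dist) (d : dist) : dist :=
  match d with
  | D0 => D0
  | DPure t => f t
  | DPlus a b => DPlus (lin f a) (lin f b)
  | DScal c a => DScal c (lin f a)
  end.

(* linear extension of a map on pure values (used only on value
   distributions; non-value pure terms are sent to 0) *)
Definition vlin (f : val -> dist) : dist -> dist :=
  lin (fun t => match t with TVal v => f v | _ => D0 end).

Definition dapp (d1 d2 : dist) : dist :=
  lin (fun t => lin (fun s => DPure (App t s)) d2) d1.

Definition dseq (d : dist) (s : dist) : dist := lin (fun t => DPure (Seq t s)) d.
Definition dlet (d : dist) (s : dist) : dist := lin (fun t => DPure (Let t s)) d.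
Definition dmatch (d : dist) (s1 s2 : dist) : dist :=
  lin (fun t => DPure (Match t s1 s2)) d.

Definition dinl (d : dist) : dist := vlin (fun v => DPure (TVal (Inl v))) d.
Definition dinr (d : dist) : dist := vlin (fun v => DPure (TVal (Inr v))) d.

Definition bsubst (body : dist) (w : dist) : dist :=
  vlin (fun v => substd 0 v body) w.

Inductive ared : tm -> dist -> Prop :=
  | ared_beta (body : dist) (v : val) :
      ared (App (TVal (Lam body)) (TVal v)) (substd 0 v body)
  | ared_seq (s : dist) : ared (Seq (TVal Star) s) s
  | ared_let (v1 v2 : val) (s : dist) :
      ared (Let (TVal (Pair v1 v2)) s) (substd 0 v1 (substd 0 (liftv 0 v2) s))
  | ared_inl (v : val) (s1 s2 : dist) :
      ared (Match (TVal (Inl v)) s1 s2) (substd 0 v s1)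
  | ared_inr (v : val) (s1 s2 : dist) :
      ared (Match (TVal (Inr v)) s1 s2) (substd 0 v s2)
  | ared_app_arg (s t : tm) (t' : dist) :
      ared t t' -> ared (App s t) (dapp (DPure s) t')
  | ared_app_fun (s : tm) (s' : dist) (v : val) :
      ared s s' -> ared (App s (TVal v)) (dapp s' (DPure (TVal v)))
  | ared_seq_ctx (t : tm) (t' : dist) (s : dist) :
      ared t t' -> ared (Seq t s) (dseq t' s)
  | ared_let_ctx (t : tm) (t' : dist) (s : dist) :
      ared t t' -> ared (Let t s) (dlet t' s)
  | ared_match_ctx (t : tm) (t' : dist) (s1 s2 : dist) :
      ared t t' -> ared (Match t s1 s2) (dmatch t' s1 s2).

Definition step (d d' : dist) : Prop :=
  exists (a : C) (s : tm) (s' r : dist),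
    dequiv d (DPlus (DScal a (DPure s)) r) /\
    dequiv d' (DPlus (DScal a s') r) /\ ared s s'.

Inductive steps : dist -> dist -> Prop :=
  | steps_refl d : steps d d
  | steps_step d1 d2 d3 : step d1 d2 -> steps d2 d3 -> steps d1 d3.

Definition is_val_tm (t : tm) : bool :=
  match t with TVal _ => true | _ => false end.

Definition valdist (d : dist) : Prop := forall t, occ d t -> is_val_tm t.

Fixpoint inner (d1 d2 : dist) : C :=
  match d1 with
  | D0 => 0
  | DPure s => coef d2 s
  | DPlus a b => inner a d2 + inner b d2
  | DScal c a => c^* * inner a d2
  end.

Definition inS (d : dist) : Prop :=
  valdist d /\ closedd 0 d /\ inner d d = 1.

Definition Span (X : dist -> Prop) (d : dist) : Prop :=
  exists l : seq (C * dist),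
    (forall p, List.In p l -> X p.2) /\
    dequiv d (dsum [seq DScal p.1 p.2 | p <- l]).

Inductive ty : Type :=
  | TU : ty
  | TSum : ty -> ty -> ty
  | TSharp : ty -> ty
  | TArrow : ty -> ty -> ty.

Definition TB : ty := TSum TU TU.

Definition lamsum (l : seq (C * dist)) : dist :=
  dsum [seq DScal p.1 (DPure (TVal (Lam p.2))) | p <- l].

Definition appsum (l : seq (C * dist)) (w : dist) : dist :=
  dsum [seq DScal p.1 (bsubst p.2 w) | p <- l].

Fixpoint interp (A : ty) (d : dist) : Prop :=
  match A with
  | TU => dequiv d (DPure (TVal Star))
  | TSum A1 A2 =>
      (exists v, interp A1 v /\ dequiv d (dinl v)) \/
      (exists w, interp A2 w /\ dequiv d (dinr w))
  | TSharp A1 => Span (interp A1) d /\ inS d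
  | TArrow A1 A2 =>
      exists l : seq (C * dist),
        dequiv d (lamsum l) /\ inS d /\
        forall v, interp A1 v ->
          exists w, steps (appsum l v) w /\ interp A2 w
  end.

Definition realizes (d : dist) (A : ty) : Prop :=
  exists w, steps d w /\ interp A w.

Definition tt : dist := DPure (TVal (Inl Star)).
Definition ff : dist := DPure (TVal (Inr Star)).

Definition is_tt_ff (d : dist) : Prop := dequiv d tt \/ dequiv d ff.

Definition piB (d : dist) : C * C :=
  (coef d (TVal (Inl Star)), coef d (TVal (Inr Star))).

Definition represents (d : dist) (F : C * C -> C * C) : Prop :=
  forall v, Span is_tt_ff v ->
    exists w, Span is_tt_ff w /\ steps (dapp d v) w /\ piB w = F (piB v).

Definition ip2 (u v : C * C) : C := u.1^* * v.1 + u.2^* * v.2.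

Definition linear2 (F : C * C -> C * C) : Prop :=
  forall (a : C) (u v : C * C),
    F (a * u.1 + v.1, a * u.2 + v.2) =
    (a * (F u).1 + (F v).1, a * (F u).2 + (F v).2).

Definition unitary2 (F : C * C -> C * C) : Prop :=
  linear2 F /\ forall u v, ip2 (F u) (F v) = ip2 u v.

(* Main.v *)
Require Import Defs.
From mathcomp Require Import all_boot all_algebra.
From mathcomp Require Import boolp Rstruct complex.
From mathcomp Require Import ring.
From Stdlib Require List.
Local Notation In := List.In.
Local Notation NoDup := List.NoDup.
Local Notation in_app_iff := List.in_app_iff.
Set Implicit Arguments.
Unset Strict Implicit.
Unset Printing Implicit Defensive.
Import GRing.Theory Num.Theory.
Local Open Scope ring_scope.

Definition Sem := ((tm -> Prop) * (tm -> C))%type.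
Definition sem (d : dist) : Sem := (occ d, coef d).

Lemma sem_eq (X Y : Sem) :
  (forall u, X.1 u <-> Y.1 u) -> (forall u, X.2 u = Y.2 u) -> X = Y.
Proof.
case: X => [x1 x2]; case: Y => [y1 y2] /= H1 H2.
f_equal; apply: funext => u; [exact: propext | exact: H2].
Qed.

Lemma dequiv_sem d1 d2 : dequiv d1 d2 <-> sem d1 = sem d2.
Proof.
split.
- move=> H; apply: sem_eq => u /=; [exact: (H u).1 | exact: (H u).2].
- move=> [H1 H2] t; split; [by rewrite H1 | by rewrite H2].
Qed.

Lemma dequiv_refl d : dequiv d d.
Proof. by move=> t. Qed.
Lemma dequiv_sym d1 d2 : dequiv d1 d2 -> dequiv d2 d1.
Proof. by move=> H t; case: (H t) => H1 H2; split; [apply: iff_sym|]. Qed.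
Lemma dequiv_trans d1 d2 d3 : dequiv d1 d2 -> dequiv d2 d3 -> dequiv d1 d3.
Proof.
move=> H G t; case: (H t) => H1 H2; case: (G t) => G1 G2; split.
- exact: iff_trans H1 G1.
- by rewrite H2.
Qed.

Lemma coef_nocc d t : ~ occ d t -> coef d t = 0.
Proof.
elim: d => [|s|a IHa b IHb|c a IHa] /= H.
- by [].
- by rewrite asboolF.
- by rewrite IHa ?IHb ?addr0 //; tauto.
- by rewrite IHa ?mulr0.
Qed.

Definition dflt : Sem := (fun _ => False, fun _ => 0).

Fixpoint combo (d : dist) (f : tm -> Sem) : tm -> Prop :=
  match d with
  | D0 => fun _ => False
  | DPure t => (f t).1
  | DPlus a b => fun u => combo a f u \/ combo b f u
  | DScal _ a => combo a f
  end.
Fixpoint combc (d : dist) (f : tm -> Sem) : tm -> C :=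
  match d with
  | D0 => fun _ => 0
  | DPure t => (f t).2
  | DPlus a b => fun u => combc a f u + combc b f u
  | DScal c a => fun u => c * combc a f u
  end.
Definition comb d f : Sem := (combo d f, combc d f).

Lemma comb_pure t f : comb (DPure t) f = f t.
Proof. by rewrite /comb /=; case: (f t). Qed.

Lemma combo_ex d f u : combo d f u <-> exists t, occ d t /\ (f t).1 u.
Proof.
elim: d => [|s|a IHa b IHb|c a IHa] /=.
- by split; [|case=> t []].
- split; [by move=> H; exists s | by case=> t [<-]].
- rewrite IHa IHb; split.
  + by case=> -[t [H1 H2]]; exists t; tauto.
  + by case=> t [[H|H] H2]; [left|right]; exists t.
- exact: IHa.
Qed.

Lemma comb_ext d f g : (forall t, occ d t -> f t = g t) -> comb d f = comb d g.
Proof.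
move=> H; apply: sem_eq => u /=.
- elim: d H => [|s|a IHa b IHb|c a IHa] /= H //.
  + by rewrite H.
  + rewrite IHa ?IHb //; move=> t Ht; apply: H; tauto.
  + exact: IHa.
- elim: d H => [|s|a IHa b IHb|c a IHa] /= H //.
  + by rewrite H.
  + rewrite IHa ?IHb //; move=> t Ht; apply: H; tauto.
  + by rewrite IHa.
Qed.

Lemma comb_id d : comb d (fun t => sem (DPure t)) = sem d.
Proof.
apply: sem_eq => u /=.
- by elim: d => [|s|a IHa b IHb|c a IHa] //=; rewrite IHa IHb.
- by elim: d => [|s|a IHa b IHb|c a IHa] //=; rewrite IHa ?IHb.
Qed.

Definition sumL (U : list tm) (h : tm -> C) : C :=
  List.fold_right (fun t acc => h t + acc) 0 U.

Lemma sumL_ext U h1 h2 : (forall t, h1 t = h2 t) -> sumL U h1 = sumL U h2.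
Proof. by move=> H; elim: U => //= x U ->; rewrite H. Qed.
Lemma sumL_zero U h : (forall t, In t U -> h t = 0) -> sumL U h = 0.
Proof.
elim: U => //= x U IH H; rewrite H ?IH ?add0r //; first by move=> t Ht; apply: H; right.
by left.
Qed.
Lemma sumL_plus U h1 h2 : sumL U (fun t => h1 t + h2 t) = sumL U h1 + sumL U h2.
Proof. elim: U => /= [|x U ->]; [by rewrite addr0 | ring]. Qed.
Lemma sumL_scal U c h : sumL U (fun t => c * h t) = c * sumL U h.
Proof. elim: U => /= [|x U ->]; [by rewrite mulr0 | ring]. Qed.

Lemma sumL_delta U s g : NoDup U -> In s U ->
  sumL U (fun t => (if `[< s = t >] then 1 else 0) * g t) = g s.
Proof.
elim: U => //= x U IH ND Hin.
inversion ND; subst.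
case: (pselect (s = x)) => [->|Hne].
- rewrite asboolT // mul1r sumL_zero ?addr0 // => t Ht.
  by rewrite asboolF ?mul0r // => E; subst.
- rewrite asboolF // mul0r add0r IH //; by case: Hin => // E; subst.
Qed.

Lemma combc_sum d f u U : NoDup U -> (forall t, occ d t -> In t U) ->
  combc d f u = sumL U (fun t => coef d t * (f t).2 u).
Proof.
move=> ND; elim: d => [|s|a IHa b IHb|c a IHa] /= H.
- by rewrite (sumL_zero (U:=U)) // => t _; rewrite mul0r.
- by rewrite sumL_delta //; apply: H.
- rewrite IHa ?IHb; try by move=> t Ht; apply: H; tauto.
  rewrite -sumL_plus; apply: sumL_ext => t; ring.
- rewrite IHa // -sumL_scal; apply: sumL_ext => t; ring.
Qed.

Fixpoint occL (d : dist) : list tm :=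
  match d with
  | D0 => nil
  | DPure t => t :: nil
  | DPlus a b => occL a ++ occL b
  | DScal _ a => occL a
  end.

Lemma occL_spec d t : occ d t <-> In t (occL d).
Proof.
elim: d => [|s|a IHa b IHb|c a IHa] //=.
- by split; [move=> ->; left | case=> //].
- by rewrite in_app_iff IHa IHb.
Qed.

Lemma nodup_ex (L : list tm) : exists U, NoDup U /\ forall t, In t U <-> In t L.
Proof.
elim: L => [|x L [U [ND H]]]; first by exists nil; split => //; constructor.
case: (pselect (In x U)) => Hx.
- exists U; split => // t; rewrite /=; split.
  + by move=> /H; right.
  + by case=> [<-|/H].
- exists (x :: U); split; first by constructor.
  move=> t /=; split; by case=> [->|/H]; [left|right].
Qed.

Lemma comb_dequiv d1 d2 f : dequiv d1 d2 -> comb d1 f = comb d2 f.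
Proof.
move=> H; apply: sem_eq => u /=.
- rewrite !combo_ex; split=> -[t [Ht1 Ht2]]; exists t; split => //; by apply (H t).
- have [U [ND HU]] := nodup_ex (occL d1).
  rewrite (combc_sum f u ND (d:=d1)); last by move=> t /occL_spec /HU.
  rewrite (combc_sum f u ND (d:=d2)); last by move=> t /(H t).1 /occL_spec /HU.
  by apply: sumL_ext => t; rewrite (H t).2.
Qed.

Lemma ared_val v d : ~ ared (TVal v) d.
Proof. by move=> H; inversion H. Qed.

Lemma ared_det s d1 d2 : ared s d1 -> ared s d2 -> d1 = d2.
Proof.
move=> H; elim: H d2 => [body v|s0|v1 v2 s0|v s1 s2|v s1 s2
  |s0 t t' Ht IH|s0 s' v Hs IH|t t' s0 Ht IH|t t' s0 Ht IH|t t' s1 s2 Ht IH] d2 H2;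
  inversion H2; subst; try reflexivity;
  try (exfalso; by apply: ared_val; eassumption).
all: match goal with Hy : ared _ _ |- _ => by rewrite (IH _ Hy) end.
Qed.

Inductive NF : tm -> Sem -> Prop :=
  | NF_val v : NF (TVal v) (sem (DPure (TVal v)))
  | NF_red s s' f : ared s s' -> (forall t, occ s' t -> NF t (f t)) ->
      NF s (comb s' f).

Lemma NF_det t X Y : NF t X -> NF t Y -> X = Y.
Proof.
move=> H; elim: H Y => [v|s s' f Hs _ IH] Y HY; inversion HY; subst.
- by [].
- by exfalso; apply: ared_val; eassumption.
- by exfalso; apply: ared_val; eassumption.
- match goal with Hy : ared s _ |- _ => have E := ared_det Hs Hy end; subst.
  apply: comb_ext => x Hx; apply: IH => //.
  match goal with Hy : forall t, occ _ t -> NF t _ |- _ => exact: Hy end.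
Qed.

Definition NFv (t : tm) : Sem :=
  match pselect (exists X, NF t X) with
  | left H => proj1_sig (cid H)
  | right _ => dflt
  end.

Lemma NFv_spec t X : NF t X -> NFv t = X.
Proof.
move=> H; rewrite /NFv; case: pselect => [H'|H']; last by exfalso; apply: H'; exists X.
case: (cid H') => Y HY /=; exact: NF_det HY H.
Qed.

Lemma NFv_NF t : (exists X, NF t X) -> NF t (NFv t).
Proof. by case=> X H; rewrite (NFv_spec H). Qed.

Definition HasNF (d : dist) := forall t, occ d t -> exists X, NF t X.

Lemma back d w : steps d w -> valdist w -> HasNF d /\ comb d NFv = sem w.
Proof.
elim=> [{}d|d1 d2 d3 [a [s [s' [r [H1 [H2 Hs]]]]]] _ IH] Hw.
- split.
  + move=> t /Hw; case: t => // v _; exists (sem (DPure (TVal v))); constructor.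
  + rewrite -comb_id; apply: comb_ext => t /Hw; case: t => // v _.
    by apply: NFv_spec; constructor.
- case: (IH Hw) => HN HE.
  have Hs' : forall t, occ s' t -> NF t (NFv t).
    by move=> t Ht; apply: NFv_NF; apply: HN; apply (H2 t).1.2 => /=; tauto.
  have NFs : NF s (comb s' NFv) by apply: NF_red.
  split.
  + move=> t /(H1 t).1.1 /= [[<-]|Ht]; first by exists (comb s' NFv).
    by apply: HN; apply (H2 t).1.2 => /=; tauto.
  + rewrite (comb_dequiv _ H1) -HE (comb_dequiv _ H2) /comb /=.
    by rewrite (NFv_spec NFs).
Qed.

Lemma step_plusl a a' b : step a a' -> step (DPlus a b) (DPlus a' b).
Proof.
case=> [c [s [s' [r [H1 [H2 Hs]]]]]]; exists c, s, s', (DPlus r b); split; last split => //.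
- move=> t; case: (H1 t) => /= E1 E2; split; first by rewrite E1; tauto.
  by rewrite E2 addrA.
- move=> t; case: (H2 t) => /= E1 E2; split; first by rewrite E1; tauto.
  by rewrite E2 addrA.
Qed.

Lemma step_plusr a b b' : step b b' -> step (DPlus a b) (DPlus a b').
Proof.
case=> [c [s [s' [r [H1 [H2 Hs]]]]]]; exists c, s, s', (DPlus a r); split; last split => //.
- move=> t; case: (H1 t) => /= E1 E2; split; first by rewrite E1; tauto.
  rewrite E2 /=; ring.
- move=> t; case: (H2 t) => /= E1 E2; split; first by rewrite E1; tauto.
  rewrite E2 /=; ring.
Qed.

Lemma step_scal c a a' : step a a' -> step (DScal c a) (DScal c a').
Proof.
case=> [e [s [s' [r [H1 [H2 Hs]]]]]]; exists (c * e), s, s', (DScal c r); split; last split => //.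
- move=> t; case: (H1 t) => /= E1 E2; split; first by rewrite E1.
  rewrite E2 /=; ring.
- move=> t; case: (H2 t) => /= E1 E2; split; first by rewrite E1.
  rewrite E2 /=; ring.
Qed.

Lemma steps_trans d1 d2 d3 : steps d1 d2 -> steps d2 d3 -> steps d1 d3.
Proof. by elim=> // x y z Hxy _ IH H; apply: steps_step Hxy (IH H). Qed.

Lemma steps_plusl a a' b : steps a a' -> steps (DPlus a b) (DPlus a' b).
Proof. elim=> [x|x y z H _ IH]; [constructor | exact: steps_step (step_plusl _ H) IH]. Qed.
Lemma steps_plusr a b b' : steps b b' -> steps (DPlus a b) (DPlus a b').
Proof. elim=> [x|x y z H _ IH]; [constructor | exact: steps_step (step_plusr _ H) IH]. Qed.
Lemma steps_scal c a a' : steps a a' -> steps (DScal c a) (DScal c a').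
Proof. elim=> [x|x y z H _ IH]; [constructor | exact: steps_step (step_scal _ H) IH]. Qed.

Lemma normD d f :
  (forall t, occ d t -> exists w, steps (DPure t) w /\ valdist w /\ sem w = f t) ->
  exists w, steps d w /\ valdist w /\ sem w = comb d f.
Proof.
elim: d => [|s|a IHa b IHb|c a IHa] /= H.
- by exists D0; split; [constructor|split].
- by rewrite comb_pure; apply: H.
- have [wa [Sa [Va Ea]]] := IHa (fun t Ht => H t (or_introl Ht)).
  have [wb [Sb [Vb Eb]]] := IHb (fun t Ht => H t (or_intror Ht)).
  exists (DPlus wa wb); split; first exact: steps_trans (steps_plusl _ Sa) (steps_plusr _ Sb).
  split; first by move=> t /= [/Va|/Vb].
  move: Ea Eb; rewrite /sem /comb /= => -[-> ->] [-> ->] //.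
- have [wa [Sa [Va Ea]]] := IHa H.
  exists (DScal c wa); split; first exact: steps_scal.
  split; first by move=> t /= /Va.
  move: Ea; rewrite /sem /comb /= => -[-> ->] //.
Qed.

Lemma normT t0 X : NF t0 X -> exists w, steps (DPure t0) w /\ valdist w /\ sem w = X.
Proof.
elim=> [v|s s' f Hs _ IH].
- exists (DPure (TVal v)); split; first constructor.
  by split => // x /= <-.
- have [w [Sw [Vw Ew]]] := normD (d := DPlus (DScal 1 s') D0) (f := f)
     (fun t Ht => IH t (match Ht with or_introl H => H | or_intror H => False_ind _ H end)).
  exists w; split; last split => //.
  + apply: steps_step Sw; exists 1, s, s', D0; split; last split => //.
    * move=> t /=; split; first tauto.
      by rewrite mul1r addr0.
  + rewrite Ew; apply: sem_eq => u /=; first tauto.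
    by rewrite mul1r addr0.
Qed.

Lemma norm d : HasNF d -> exists w, steps d w /\ valdist w /\ sem w = comb d NFv.
Proof.
move=> H; apply: normD => t Ht; apply: normT; exact: NFv_NF (H t Ht).
Qed.

Lemma comb_lin g d f : comb (lin g d) f = comb d (fun t => comb (g t) f).
Proof.
apply: sem_eq => u /=.
- by elim: d => [|s|a IHa b IHb|c a IHa] //=; rewrite IHa IHb.
- by elim: d => [|s|a IHa b IHb|c a IHa] //=; rewrite IHa ?IHb.
Qed.

Lemma occ_lin g d u : occ (lin g d) u <-> exists t, occ d t /\ occ (g t) u.
Proof.
elim: d => [|s|a IHa b IHb|c a IHa] /=.
- by split => // -[t []].
- by split; [move=> H; exists s | case=> t [<-]].
- rewrite IHa IHb; split.
  + by case=> -[t [H1 H2]]; exists t; tauto.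
  + by case=> t [[H|H] H2]; [left|right]; exists t.
- exact: IHa.
Qed.

Lemma comb_plus a b a' b' f f' : comb a f = comb a' f' -> comb b f = comb b' f' ->
  comb (DPlus a b) f = comb (DPlus a' b') f'.
Proof. by rewrite /comb /= => -[-> ->] [-> ->]. Qed.
Lemma comb_scal c a a' f f' : comb a f = comb a' f' ->
  comb (DScal c a) f = comb (DScal c a') f'.
Proof. by rewrite /comb /= => -[-> ->]. Qed.

Lemma occ_lamsum l t : occ (lamsum l) t -> exists b, t = TVal (Lam b).
Proof.
elim: l => //= p l IH [<-|/IH] //; by exists p.2.
Qed.

Definition Phi (t s : tm) : Sem :=
  match t with
  | TVal (Lam b) => match s with TVal x => comb (substd 0 x b) NFv | _ => dflt end
  | _ => dflt
  end.

Lemma comb_bsubst b v : comb (bsubst b v) NFv = comb v (Phi (TVal (Lam b))).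
Proof.
rewrite /bsubst /vlin comb_lin; apply: comb_ext => t _; by case: t.
Qed.

Lemma comb_appsum l v : comb (appsum l v) NFv = comb (lamsum l) (fun t => comb v (Phi t)).
Proof.
elim: l => //= p l IH; apply: comb_plus => //; apply: comb_scal.
by rewrite comb_pure comb_bsubst.
Qed.

Lemma occ_dapp L v u : occ (dapp L v) u <->
  exists t s, occ L t /\ occ v s /\ u = App t s.
Proof.
rewrite /dapp occ_lin; split.
- case=> t [Ht /occ_lin [s [Hs /= <-]]]; by exists t, s.
- case=> t [s [Ht [Hs ->]]]; exists t; split => //; apply/occ_lin; by exists s.
Qed.

Lemma NF_beta b x : HasNF (substd 0 x b) ->
  NF (App (TVal (Lam b)) (TVal x)) (comb (substd 0 x b) NFv).
Proof. move=> H; apply: NF_red; first constructor. by move=> t /H /NFv_NF. Qed.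

Lemma NF_beta_inv b x X : NF (App (TVal (Lam b)) (TVal x)) X -> HasNF (substd 0 x b).
Proof.
move=> H; inversion H; subst.
have E := ared_det H0 (ared_beta b x); subst.
by move=> t /H1 Ht; exists (f t).
Qed.

Lemma comb_dapp L v :
  (forall t, occ L t -> exists b, t = TVal (Lam b)) ->
  (forall s, occ v s -> exists x, s = TVal x) ->
  (forall b x, occ L (TVal (Lam b)) -> occ v (TVal x) -> HasNF (substd 0 x b)) ->
  comb (dapp L v) NFv = comb L (fun t => comb v (Phi t)).
Proof.
move=> HL Hv H; rewrite /dapp comb_lin; apply: comb_ext => t Ht.
rewrite comb_lin; apply: comb_ext => s Hs; rewrite comb_pure.
case: (HL t Ht) => b Eb; case: (Hv s Hs) => x Ex; subst.
apply: NFv_spec; apply: NF_beta; exact: H.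
Qed.

Lemma HasNF_dapp L v :
  (forall t, occ L t -> exists b, t = TVal (Lam b)) ->
  (forall s, occ v s -> exists x, s = TVal x) ->
  (forall b x, occ L (TVal (Lam b)) -> occ v (TVal x) -> HasNF (substd 0 x b)) ->
  HasNF (dapp L v).
Proof.
move=> HL Hv H u /occ_dapp [t [s [Ht [Hs ->]]]].
case: (HL t Ht) => b Eb; case: (Hv s Hs) => x Ex; subst.
eexists; apply: NF_beta; exact: H.
Qed.

Lemma occ_appsum l v u : occ (appsum l v) u ->
  exists b x, occ (lamsum l) (TVal (Lam b)) /\ occ v (TVal x) /\ occ (substd 0 x b) u.
Proof.
elim: l => //= p l IH [H|/IH [b [x [H1 H2]]]]; last by exists b, x; tauto.
move: H; rewrite /bsubst /vlin occ_lin => -[t [Ht H]].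
case: t Ht H => // x Hx H; by exists p.2, x; tauto.
Qed.

Definition uT : tm := TVal (Inl Star).
Definition uF : tm := TVal (Inr Star).
Definition TFd (d : dist) := forall t, occ d t -> t = uT \/ t = uF.

Lemma uTF : uT <> uF. Proof. by []. Qed.

Lemma coef_tt t : coef tt t = if `[< uT = t >] then 1 else 0.
Proof. by []. Qed.

Lemma coef_pure_eq t : coef (DPure t) t = 1.
Proof. by rewrite /= asboolT. Qed.
Lemma coef_pure_neq s t : s <> t -> coef (DPure s) t = 0.
Proof. by move=> H; rewrite /= asboolF. Qed.

Lemma span_TF P d : Span P d -> (forall p, P p -> TFd p) -> TFd d.
Proof.
case=> l [Hl Hd] HP t /(Hd t).1.1; clear Hd.
elim: l Hl => //= p l IH Hl [H|H].
- by apply: (HP p.2) => //; apply: Hl; left.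
- by apply: IH => // q Hq; apply: Hl; right.
Qed.

Lemma TB_TF p : interp TB p -> TFd p.
Proof.
case=> -[v [Hv Hp]] t /(Hp t).1.1; rewrite /dinl /dinr /vlin occ_lin => -[s [Hs Ht]];
  have := (Hv s).1.1 Hs => /= E; subst; move: Ht => /= <-; by [left|right].
Qed.

Lemma ttff_TF p : is_tt_ff p -> TFd p.
Proof. by case=> H t /(H t).1.1 /= <-; [left|right]. Qed.

Lemma aTT : `[< uT = uT >] = true. Proof. exact: asboolT. Qed.
Lemma aFF : `[< uF = uF >] = true. Proof. exact: asboolT. Qed.
Lemma aTF : `[< uT = uF >] = false. Proof. exact: asboolF. Qed.
Lemma aFT : `[< uF = uT >] = false. Proof. exact: asboolF. Qed.
Lemma aN (u t : tm) : t <> u -> `[< u = t >] = false.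
Proof. by move=> H; apply: asboolF => E; apply: H. Qed.

Lemma TF_span P d : P tt -> P ff -> TFd d -> Span P d.
Proof.
move=> Pt Pf H.
have Hc : forall t, t <> uT -> t <> uF -> coef d t = 0 /\ ~ occ d t.
  move=> t H1 H2; have Ho : ~ occ d t by move=> /H [] //.
  by split => //; apply: coef_nocc.
have HT' : ~ occ d uT -> coef d uT = 0 by apply: coef_nocc.
have HF' : ~ occ d uF -> coef d uF = 0 by apply: coef_nocc.
case: (pselect (occ d uT)) => HT; case: (pselect (occ d uF)) => HF.
- exists [:: (coef d uT, tt); (coef d uF, ff)]; split.
  + by move=> p /= [<-|[<-|]].
  + move=> t; rewrite /= -/uT -/uF.
    case: (pselect (t = uT)) => [->|Ht]; [|case: (pselect (t = uF)) => [->|Hf]].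
    * rewrite aTT aFT; split; [split => // _; by left | ring].
    * rewrite aTF aFF; split; [split => // _; by right; left | ring].
    * case: (Hc t Ht Hf) => -> Ho; rewrite (aN Ht) (aN Hf); split; last ring.
      by split => // -[E|[E|]] //; subst.
- exists [:: (coef d uT, tt)]; split.
  + by move=> p /= [<-|].
  + move=> t; rewrite /= -/uT.
    case: (pselect (t = uT)) => [->|Ht]; [|case: (pselect (t = uF)) => [->|Hf]].
    * rewrite aTT; split; [split => // _; by left | ring].
    * rewrite aTF (HF' HF); split; [split => // -[] // | ring].
    * case: (Hc t Ht Hf) => -> Ho; rewrite (aN Ht); split; last ring.
      by split => // -[E|] //; subst.
- exists [:: (coef d uF, ff)]; split.
  + by move=> p /= [<-|].
  + move=> t; rewrite /= -/uF.
    case: (pselect (t = uT)) => [->|Ht]; [|case: (pselect (t = uF)) => [->|Hf]].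
    * rewrite aFT (HT' HT); split; [split => // -[] // | ring].
    * rewrite aFF; split; [split => // _; by left | ring].
    * case: (Hc t Ht Hf) => -> Ho; rewrite (aN Hf); split; last ring.
      by split => // -[E|] //; subst.
- exists [::]; split => // t /=.
  case: (pselect (t = uT)) => [->|Ht]; first by rewrite coef_nocc.
  case: (pselect (t = uF)) => [->|Hf]; first by rewrite coef_nocc.
  by case: (Hc t Ht Hf) => ->.
Qed.

Lemma TB_tt : interp TB tt.
Proof. left; exists (DPure (TVal Star)); split; exact: dequiv_refl. Qed.
Lemma TB_ff : interp TB ff.
Proof. right; exists (DPure (TVal Star)); split; exact: dequiv_refl. Qed.
Lemma ttff_tt : is_tt_ff tt. Proof. left; exact: dequiv_refl. Qed.
Lemma ttff_ff : is_tt_ff ff. Proof. right; exact: dequiv_refl. Qed.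

Lemma inner_TF w d : TFd w ->
  inner w d = (coef w uT)^* * coef d uT + (coef w uF)^* * coef d uF.
Proof.
elim: w => [|s|a IHa b IHb|c a IHa] /= H.
- by rewrite rmorph0 !mul0r addr0.
- case: (H s) => //= ->.
  + by rewrite aTT aTF rmorph1 rmorph0 mul1r mul0r addr0.
  + by rewrite aFF aFT rmorph1 rmorph0 mul1r mul0r add0r.
- rewrite IHa ?IHb; try by move=> t Ht; apply: H => /=; tauto.
  rewrite !rmorphD; ring.
- rewrite IHa // !rmorphM; ring.
Qed.

Lemma combc_TF v K u : TFd v ->
  combc v K u = coef v uT * (K uT).2 u + coef v uF * (K uF).2 u.
Proof.
move=> H; rewrite (combc_sum K u (U := uT :: uF :: nil)).
- by rewrite /= addr0.
- by constructor; [move=> [|] | constructor; [|constructor]].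
- by move=> t /H [->|->] /=; tauto.
Qed.

Lemma combo_TF v K u : TFd v -> combo v K u ->
  (occ v uT /\ (K uT).1 u) \/ (occ v uF /\ (K uF).1 u).
Proof.
move=> H /combo_ex [t [Ht Hk]]; case: (H t Ht) => E; subst; tauto.
Qed.

Lemma combc_lin2 d g g1 g2 x y u :
  (forall t, (g t).2 u = x * (g1 t).2 u + y * (g2 t).2 u) ->
  combc d g u = x * combc d g1 u + y * combc d g2 u.
Proof.
move=> H; elim: d => [|s|a IHa b IHb|c a IHa] /=.
- by rewrite !mulr0 addr0.
- exact: H.
- rewrite IHa IHb; ring.
- rewrite IHa; ring.
Qed.

Lemma combo_or d g g1 g2 u :
  (forall t, (g t).1 u -> (g1 t).1 u \/ (g2 t).1 u) ->
  combo d g u -> combo d g1 u \/ combo d g2 u.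
Proof.
move=> H; elim: d => [|s|a IHa b IHb|c a IHa] //=.
- exact: H.
- by case=> [/IHa|/IHb]; tauto.
Qed.

Lemma closed_occ k d : (forall t, occ d t -> closedt k t) -> closedd k d.
Proof.
elim: d => [|s|a IHa b IHb|c a IHa] //= H.
- exact: H.
- by rewrite IHa ?IHb // => t Ht; apply: H; tauto.
Qed.
Lemma cD (a b : C) : (a + b)^* = a^* + b^*. Proof. exact: rmorphD. Qed.
Lemma cM (a b : C) : (a * b)^* = a^* * b^*. Proof. exact: rmorphM. Qed.
Lemma cN (n : nat) : (n%:R : C)^* = n%:R. Proof. exact: conjC_nat. Qed.
Lemma cV (a : C) : (a^-1)^* = (a^*)^-1. Proof. exact: fmorphV. Qed.
Definition c35 : C := 3%:R / 5%:R.
Definition c45 : C := 4%:R / 5%:R.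
Definition Fm (a1 a2 b1 b2 : C) (u : C * C) : C * C :=
  (u.1 * a1 + u.2 * b1, u.1 * a2 + u.2 * b2).

Lemma five_neq0 : (5%:R : C) != 0. Proof. by rewrite pnatr_eq0. Qed.
Lemma c_sq : c35 * c35 + c45 * c45 = 1.
Proof. by rewrite /c35 /c45; field. Qed.
Lemma c35_conj : c35^* = c35.
Proof. by rewrite /c35 cM cV !cN. Qed.
Lemma c45_conj : c45^* = c45.
Proof. by rewrite /c45 cM cV !cN. Qed.
Lemma c_neq0 : c35 * c45 != 0.
Proof. rewrite /c35 /c45 mulf_neq0 // mulf_neq0 ?invr_eq0 ?pnatr_eq0 //. Qed.

Lemma k35 (a : C) : (c35 * a)^* = c35 * a^*. Proof. by rewrite cM c35_conj. Qed.
Lemma k45 (a : C) : (c45 * a)^* = c45 * a^*. Proof. by rewrite cM c45_conj. Qed.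
Lemma k45i (a : C) : (c45 * 'i * a)^* = - (c45 * 'i) * a^*.
Proof. by rewrite cM [(c45 * _)^*]cM c45_conj conjCi mulrN mulNr. Qed.

Lemma unit_alg (a1 a2 b1 b2 : C) :
  a1^* * a1 + a2^* * a2 = 1 -> b1^* * b1 + b2^* * b2 = 1 ->
  (c35 * a1 + c45 * b1)^* * (c35 * a1 + c45 * b1) +
  (c35 * a2 + c45 * b2)^* * (c35 * a2 + c45 * b2) = 1 ->
  (c35 * a1 + c45 * 'i * b1)^* * (c35 * a1 + c45 * 'i * b1) +
  (c35 * a2 + c45 * 'i * b2)^* * (c35 * a2 + c45 * 'i * b2) = 1 ->
  forall u v, ip2 (Fm a1 a2 b1 b2 u) (Fm a1 a2 b1 b2 v) = ip2 u v.
Proof.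
move=> Na Nb H3 H4 [u1 u2] [v1 v2]; rewrite /ip2 /Fm /=.
move: H3 H4; rewrite !cD !k35 !k45i !k45 => H3 H4.
set z := a1^* * b1 + a2^* * b2.
set z' := b1^* * a1 + b2^* * a2.
have E3 : c35 * c35 * (a1^* * a1 + a2^* * a2) + c45 * c45 * (b1^* * b1 + b2^* * b2)
   + c35 * c45 * (z + z') = 1 by rewrite -H3 /z /z'; ring.
have E4 : c35 * c35 * (a1^* * a1 + a2^* * a2) + c45 * c45 * (b1^* * b1 + b2^* * b2)
   + c35 * c45 * 'i * (z - z') = 1.
  rewrite -H4 /z /z'.
  have Hi : 'i * 'i = -1 :> C by rewrite -expr2 sqrCi.
  transitivity (c35 * c35 * (a1^* * a1 + a2^* * a2) - c45 * c45 * ('i * 'i) * (b1^* * b1 + b2^* * b2)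
   + c35 * c45 * 'i * (a1^* * b1 + a2^* * b2 - (b1^* * a1 + b2^* * a2))).
    by rewrite Hi; ring.
  ring.
rewrite Na Nb !mulr1 c_sq in E3 E4.
have Zs : z + z' = 0.
  have : c35 * c45 * (z + z') = 0 by apply: (addrI 1); rewrite addr0.
  by move/eqP; rewrite mulf_eq0 (negbTE c_neq0) /= => /eqP.
have Zd : z - z' = 0.
  have : c35 * c45 * 'i * (z - z') = 0 by apply: (addrI 1); rewrite addr0.
  by move/eqP; rewrite mulf_eq0 mulf_eq0 (negbTE c_neq0) (negbTE (@neq0Ci C)) /= => /eqP.
have Hz : z = 0.
  have : z *+ 2 = 0.
    have E : z *+ 2 = (z + z') + (z - z') by rewrite mulr2n; ring.
    by rewrite E Zs Zd addr0.
  by move/eqP; rewrite mulrn_eq0 /= => /eqP.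
have Hz' : z' = 0 by move: Zs; rewrite Hz add0r.
rewrite ?cD !cM.
transitivity (u1^* * v1 * (a1^* * a1 + a2^* * a2) + u2^* * v2 * (b1^* * b1 + b2^* * b2)
  + u1^* * v2 * z + u2^* * v1 * z'); first by rewrite /z /z'; ring.
by rewrite Na Nb Hz Hz'; ring.
Qed.

Lemma TF_valdist d : TFd d -> valdist d.
Proof. by move=> H t /H [->|->]. Qed.

Lemma inner_ip2 w : TFd w -> inner w w = ip2 (piB w) (piB w).
Proof. by move=> H; rewrite inner_TF. Qed.

Lemma interpB_of v : TFd v -> inner v v = 1 -> interp (TSharp TB) v.
Proof.
move=> H Hn; split; first exact: TF_span TB_tt TB_ff H.
split; first exact: TF_valdist.
split => //; apply: closed_occ => t /H [->|->] //.
Qed.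

Lemma occ_appsum2 l b v u : occ (lamsum l) (TVal (Lam b)) -> occ (bsubst b v) u ->
  occ (appsum l v) u.
Proof.
elim: l => //= p l IH [E|H] Hu; last by right; apply: IH.
by left; case: E Hu => ->.
Qed.

Lemma TFd_val v s : TFd v -> occ v s -> exists x, s = TVal x.
Proof. by move=> H /H [->|->]; eexists. Qed.

Lemma run l l0 v : dequiv (lamsum l) (lamsum l0) ->
  (forall v, interp (TSharp TB) v ->
     exists w, steps (appsum l0 v) w /\ interp (TSharp TB) w) ->
  TFd v -> inner v v = 1 ->
  exists w, HasNF (appsum l0 v) /\ TFd w /\ inner w w = 1 /\
    comb (lamsum l) (fun t => comb v (Phi t)) = sem w.
Proof.
move=> Heq Harr Hv Hn.
case: (Harr v (interpB_of Hv Hn)) => w [Sw [Spw [Vw [_ Nw]]]].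
have TFw : TFd w := span_TF Spw TB_TF.
case: (back Sw Vw) => HN HE.
exists w; split => //; split => //; split => //.
by rewrite (comb_dequiv _ Heq) -comb_appsum.
Qed.

Definition vplus : dist := DPlus (DScal c35 tt) (DScal c45 ff).
Definition vimag : dist := DPlus (DScal c35 tt) (DScal (c45 * 'i) ff).

Lemma TF_tt : TFd tt. Proof. by move=> t /= <-; left. Qed.
Lemma TF_ff : TFd ff. Proof. by move=> t /= <-; right. Qed.
Lemma TF_vplus : TFd vplus. Proof. by move=> t /= [] <-; [left|right]. Qed.
Lemma TF_vimag : TFd vimag. Proof. by move=> t /= [] <-; [left|right]. Qed.

Lemma coef_tt_T : coef tt uT = 1. Proof. exact: coef_pure_eq. Qed.
Lemma coef_tt_F : coef tt uF = 0. Proof. by apply: coef_pure_neq. Qed.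
Lemma coef_ff_T : coef ff uT = 0. Proof. by apply: coef_pure_neq. Qed.
Lemma coef_ff_F : coef ff uF = 1. Proof. exact: coef_pure_eq. Qed.

Lemma norm_tt : inner tt tt = 1.
Proof. by rewrite (@inner_TF tt tt TF_tt) coef_tt_T coef_tt_F rmorph1 rmorph0 !mulr1 mulr0 addr0. Qed.
Lemma norm_ff : inner ff ff = 1.
Proof. by rewrite (@inner_TF ff ff TF_ff) coef_ff_T coef_ff_F rmorph1 rmorph0 !mulr1 mul0r add0r. Qed.
Lemma norm_vplus : inner vplus vplus = 1.
Proof.
rewrite (@inner_TF vplus vplus TF_vplus) /= aTT aFT aTF aFF.
rewrite !mulr0 !mulr1 addr0 add0r c35_conj c45_conj; exact: c_sq.
Qed.
Lemma norm_vimag : inner vimag vimag = 1.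
Proof.
rewrite (@inner_TF vimag vimag TF_vimag) /= aTT aFT aTF aFF.
rewrite !mulr0 !mulr1 addr0 add0r c35_conj cM c45_conj conjCi -c_sq.
have Hi : 'i * 'i = -1 :> C by rewrite -expr2 sqrCi.
transitivity (c35 * c35 - c45 * c45 * ('i * 'i)); first ring.
rewrite Hi; ring.
Qed.

Lemma TF_x v x : TFd v -> occ v (TVal x) -> x = Inl Star \/ x = Inr Star.
Proof. by move=> H /H [[->]|[->]]; [left|right]. Qed.

Lemma lin_formula l v : TFd v -> forall u,
  combc (lamsum l) (fun t => comb v (Phi t)) u =
  coef v uT * combc (lamsum l) (fun t => Phi t uT) u +
  coef v uF * combc (lamsum l) (fun t => Phi t uF) u.
Proof. by move=> H u; apply: combc_lin2 => t /=; rewrite combc_TF. Qed.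

Lemma occ_formula l v : TFd v -> forall u,
  combo (lamsum l) (fun t => comb v (Phi t)) u ->
  combo (lamsum l) (fun t => Phi t uT) u \/ combo (lamsum l) (fun t => Phi t uF) u.
Proof.
move=> H u; apply: combo_or => t /= /(combo_TF H); tauto.
Qed.

Lemma comb_single l s : comb (lamsum l) (fun t => comb (DPure s) (Phi t)) =
  comb (lamsum l) (fun t => Phi t s).
Proof. by apply: comb_ext => t _; rewrite comb_pure. Qed.

Local Close Scope ring_scope.

Theorem mainTheorem2 (l : seq (C * dist)) :
  (forall p, List.In p l -> closedv 0 (Lam p.2)) ->
  inS (lamsum l) ->
  (interp (TArrow (TSharp TB) (TSharp TB)) (lamsum l) <->
   exists F : C * C -> C * C, unitary2 F /\ represents (lamsum l) F).
Proof.
move=> _ HS.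
have HL : forall t, occ (lamsum l) t -> exists b, t = TVal (Lam b) by move=> t; apply: occ_lamsum.
split.
- case=> l0 [Heq [_ Harr]].
  have [wT [HNT [TFT [NT ET]]]] := run Heq Harr TF_tt norm_tt.
  have [wF [HNF' [TFF [NF' EF]]]] := run Heq Harr TF_ff norm_ff.
  have [wP [_ [TFP [NP EP]]]] := run Heq Harr TF_vplus norm_vplus.
  have [wI [_ [TFI [NI EI]]]] := run Heq Harr TF_vimag norm_vimag.
  rewrite comb_single in ET; rewrite comb_single in EF.
  have HNF : forall b x, occ (lamsum l) (TVal (Lam b)) -> x = Inl Star \/ x = Inr Star ->
      HasNF (substd 0 x b).
    move=> b x Hb [->|->] t Ht.
    + apply: HNT; apply: (occ_appsum2 (b := b)) => //; exact: (Heq _).1.1.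
    + apply: HNF'; apply: (occ_appsum2 (b := b)) => //; exact: (Heq _).1.1.
  have cT : forall u, combc (lamsum l) (fun t => Phi t uT) u = coef wT u
    by move=> u; rewrite -[coef wT]/((sem wT).2) -ET.
  have cF : forall u, combc (lamsum l) (fun t => Phi t uF) u = coef wF u
    by move=> u; rewrite -[coef wF]/((sem wF).2) -EF.
  have oT : forall u, combo (lamsum l) (fun t => Phi t uT) u -> occ wT u
    by move=> u; rewrite -[occ wT]/((sem wT).1) -ET.
  have oF : forall u, combo (lamsum l) (fun t => Phi t uF) u -> occ wF u
    by move=> u; rewrite -[occ wF]/((sem wF).1) -EF.
  have coefs : forall v w, TFd v ->
      comb (lamsum l) (fun t => comb v (Phi t)) = sem w ->
      forall u, coef w u = (coef v uT * coef wT u + coef v uF * coef wF u)%R.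
    move=> v w Hv E u; rewrite -[coef w]/((sem w).2) -E /= lin_formula //.
    by rewrite cT cF.
  set a1 := coef wT uT; set a2 := coef wT uF.
  set b1 := coef wF uT; set b2 := coef wF uF.
  exists (Fm a1 a2 b1 b2); split; first split.
  + move=> a [u1 u2] [v1 v2]; rewrite /Fm /=; congr pair; ring.
  + apply: unit_alg.
    * by move: NT; rewrite inner_TF.
    * by move: NF'; rewrite inner_TF.
    * move: NP; rewrite inner_TF // !(coefs _ _ TF_vplus EP) /= aTT aFT aTF aFF.
      by rewrite !mulr1 !mulr0 addr0 add0r.
    * move: NI; rewrite inner_TF // !(coefs _ _ TF_vimag EI) /= aTT aFT aTF aFF.
      by rewrite !mulr1 !mulr0 addr0 add0r.
  + move=> v Hv.
    have TFv : TFd v := span_TF Hv ttff_TF.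
    have HNv : forall b x, occ (lamsum l) (TVal (Lam b)) -> occ v (TVal x) ->
        HasNF (substd 0 x b).
      by move=> b x Hb Hx; apply: HNF => //; apply: TF_x Hx.
    have [w [Sw [Vw Ew]]] := norm (HasNF_dapp HL (fun s => TFd_val TFv) HNv).
    rewrite (comb_dapp HL (fun s => TFd_val TFv) HNv) in Ew.
    have TFw : TFd w.
      move=> u Hu; have : (sem w).1 u by [].
      rewrite Ew /= => /(occ_formula TFv) [/oT|/oF]; [exact: TFT | exact: TFF].
    exists w; split; first exact: TF_span ttff_tt ttff_ff TFw.
    split => //.
    rewrite /piB /Fm /= !(coefs _ _ TFv (esym Ew)) /a1 /a2 /b1 /b2.
    by congr pair; ring.
- case=> F [[Flin Fip] Hrep].
  exists l; split; first exact: dequiv_refl.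
  split => // v [Hsp HSv].
  have TFv : TFd v := span_TF Hsp TB_TF.
  case: (Hrep v (TF_span ttff_tt ttff_ff TFv)) => w0 [Spw0 [Sw0 Hpi]].
  have TFw0 : TFd w0 := span_TF Spw0 ttff_TF.
  case: (back Sw0 (TF_valdist TFw0)) => HNd Ed.
  have HNv : forall b x, occ (lamsum l) (TVal (Lam b)) -> occ v (TVal x) ->
      HasNF (substd 0 x b).
    move=> b x Hb Hx.
    have [X HX] : exists X, NF (App (TVal (Lam b)) (TVal x)) X.
      by apply: HNd; apply/occ_dapp; exists (TVal (Lam b)), (TVal x).
    exact: NF_beta_inv HX.
  rewrite (comb_dapp HL (fun s => TFd_val TFv) HNv) -comb_appsum in Ed.
  have HNa : HasNF (appsum l v).
    move=> u /occ_appsum [b [x [Hb [Hx Hu]]]]; exact: HNv Hx u Hu.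
  have [w [Sw [Vw Ew]]] := norm HNa.
  rewrite Ed in Ew.
  have Eq := (dequiv_sem w w0).2 Ew.
  exists w; split => //.
  have TFw : TFd w by move=> u /(Eq u).1.1 /TFw0.
  apply: interpB_of => //.
  rewrite inner_ip2 //.
  have -> : piB w = piB w0 by rewrite /piB !(Eq _).2.
  rewrite Hpi Fip -inner_ip2 //; by case: HSv => _ [_].
Qed.
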